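(* Let $P=\{\mathbf{u}\in\mathbb{R}^n:\ell_j(\mathbf{u}):=\langle\mathbf{u},\mathbf{v}_j\rangle-\lambda_j\ge0,\ j=1,\dots,m\}$ and, for $i=1,2,\dots$, let $P^{(i)}=\{\mathbf{u}:\ell^{(i)}_j(\mathbf{u}):=\langle\mathbf{u},\mathbf{v}_j\rangle-\lambda^{(i)}_j\ge0,\ j=1,\dots,m\}$ be polytopes, where all these descriptions are non-redundant (each half-space bounds a distinct facet) and the $\mathbf{v}_j\in\mathbb{Z}^n$ are primitive. If $P^{(i)}$ converges to $P$ with respect to the Hausdorff distance, then $\lambda^{(i)}_j-\lambda_j\to0$ as $i\to\infty$ for each $j$.
   Context: The Hausdorff distance between subsets $Q_1,Q_2\subset\mathbb{R}^n$ is $\max\{\sup_{q_1\in Q_1}\inf_{q_2\in Q_2}d(q_1,q_2),\ \sup_{q_2\in Q_2}\inf_{q_1\in Q_1}d(q_1,q_2)\}$ with $d$ the Euclidean distance. *)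

(* Defs.v *)
From HB Require Import structures.
From mathcomp Require Import all_boot all_order all_algebra.
From mathcomp Require Import boolp classical_sets reals topology normedtype sequences.
Set Implicit Arguments. Unset Strict Implicit. Unset Printing Implicit Defensive.
Import Order.TTheory GRing.Theory Num.Theory.
Local Open Scope classical_set_scope.
Local Open Scope ring_scope.

Section Defs.
Variables (R : realType) (n m : nat).

Definition primitive (w : 'I_n -> int) : Prop :=
  \big[gcdn/0%N]_(k < n) `|w k|%N = 1%N.

Definition ipz (w : 'I_n -> int) (u : 'rV[R]_n) : R :=
  \sum_(k < n) (w k)%:~R * u ord0 k.

Definition ell (v : 'I_m -> 'I_n -> int) (lam : 'I_m -> R) (j : 'I_m)
  (u : 'rV[R]_n) : R := ipz (v j) u - lam j.

Definition hpoly (v : 'I_m -> 'I_n -> int) (lam : 'I_m -> R) : set 'rV[R]_n :=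
  [set u | forall j, 0 <= ell v lam j u].

Definition bounded_pt (A : set 'rV[R]_n) : Prop :=
  exists M : R, forall u, A u -> forall k, `|u ord0 k| <= M.

Definition face_j (v : 'I_m -> 'I_n -> int) (lam : 'I_m -> R) (j : 'I_m) :
  set 'rV[R]_n := [set u | hpoly v lam u /\ ell v lam j u = 0].

(* affine dimension of F is at least d: F contains x0 and d further points
   whose differences with x0 are linearly independent *)
Definition affdim_ge (F : set 'rV[R]_n) (d : nat) : Prop :=
  exists (x0 : 'rV[R]_n) (p : 'I_d -> 'rV[R]_n),
    F x0 /\ (forall k, F (p k)) /\ row_free (\matrix_(k < d) (p k - x0)).

(* the description is non-redundant: every half-space bounds a facet
   (a face of dimension n-1; it lies in the hyperplane l_j = 0, v_j <> 0,
   so its dimension is at most n-1) and these facets are pairwise distinct *)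
Definition nonredundant (v : 'I_m -> 'I_n -> int) (lam : 'I_m -> R) : Prop :=
  (forall j, affdim_ge (face_j v lam j) n.-1) /\
  (forall j k, j != k -> face_j v lam j <> face_j v lam k).

Definition polytope_desc (v : 'I_m -> 'I_n -> int) (lam : 'I_m -> R) : Prop :=
  bounded_pt (hpoly v lam) /\ nonredundant v lam.

End Defs.

Section Haus.
Variables (R : realType) (n : nat).

Definition edist (x y : 'rV[R]_n) : R :=
  Num.sqrt (\sum_(k < n) (x ord0 k - y ord0 k) ^+ 2).

(* Hausdorff distance (real-valued; used on nonempty bounded sets) *)
Definition hausdorff (A B : set 'rV[R]_n) : R :=
  Num.max (sup [set inf [set edist a b | b in B] | a in A])
          (sup [set inf [set edist a b | a in A] | b in B]).
End Haus.

(* Main.v *)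
Require Import Defs.
From HB Require Import structures.
From mathcomp Require Import all_boot all_order all_algebra.
From mathcomp Require Import boolp classical_sets reals topology normedtype sequences.
From mathcomp Require Import ring lra.
Import Order.TTheory GRing.Theory Num.Theory.
Import numFieldNormedType.Exports.
Local Open Scope classical_set_scope.
Local Open Scope ring_scope.

Section Aux.
Variables (R : realType) (n : nat).

Lemma coord_le_edist (x y : 'rV[R]_n) k : `|x ord0 k - y ord0 k| <= Defs.edist x y.
Proof.
rewrite /Defs.edist -sqrtr_sqr ler_sqrt; last by apply: sumr_ge0 => i _; rewrite sqr_ge0.
rewrite (bigD1 k) //= lerDl; apply: sumr_ge0 => i _; exact: sqr_ge0.
Qed.

Lemma ipz_diff (w : 'I_n -> int) (x y : 'rV[R]_n) :
  ipz w x - ipz w y <= (\sum_(k < n) `|(w k)%:~R : R|) * Defs.edist x y.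
Proof.
rewrite /ipz -sumrB mulr_suml.
apply: le_trans (ler_norm _) _.
apply: le_trans (ler_norm_sum _ _ _) _.
apply: ler_sum => k _; rewrite -mulrBr normrM; apply: ler_wpM2l => //.
exact: coord_le_edist.
Qed.

Lemma edist_bound (A B : set 'rV[R]_n) : bounded_pt A -> bounded_pt B ->
  exists M, forall a b, A a -> B b -> 0 <= Defs.edist a b <= M.
Proof.
move=> [Ma HA] [Mb HB].
exists (\sum_(k < n) (Ma + Mb) ^+ 2 + 1) => a b Aa Bb.
apply/andP; split; first exact: sqrtr_ge0.
have HS : \sum_(k < n) (a ord0 k - b ord0 k) ^+ 2 <= \sum_(k < n) (Ma + Mb) ^+ 2.
  apply: ler_sum => k _.
  have := HA a Aa k; have := HB b Bb k; rewrite !ler_norml => /andP[h1 h2] /andP[h3 h4].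
  nra.
have S0 : 0 <= \sum_(k < n) (a ord0 k - b ord0 k) ^+ 2.
  by apply: sumr_ge0 => k _; rewrite sqr_ge0.
rewrite /Defs.edist.
set S := \sum_(k < n) (a ord0 k - b ord0 k) ^+ 2 in HS S0 *.
set T := \sum_(k < n) (Ma + Mb) ^+ 2 in HS *.
apply: le_trans (_ : Num.sqrt ((S + 1) ^+ 2) <= _).
  by rewrite ler_sqrt ?sqr_ge0 //; nra.
rewrite sqrtr_sqr ger0_norm; lra.
Qed.

Lemma sup_inf_near (T : Type) (X Y : set T) (f : T -> T -> R) M x eps :
  (forall x y, X x -> Y y -> 0 <= f x y <= M) -> Y !=set0 -> X x -> 0 < eps ->
  exists2 y, Y y & f x y < sup [set inf [set f x y | y in Y] | x in X] + eps.
Proof.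
move=> Hf [y0 Yy0] Xx e0.
have hinf : forall x, X x -> has_inf [set f x y | y in Y].
  move=> x' Xx'; split; first by exists (f x' y0), y0.
  by exists 0 => _ [y Yy <-]; have /andP[] := Hf x' y Xx' Yy.
have [_ [y Yy <-] hy] := inf_adherent e0 (hinf x Xx).
exists y => //; apply: (lt_le_trans hy); rewrite lerD2r.
apply: ub_le_sup; last by exists x.
exists M => _ [x' Xx' <-].
apply: le_trans (ge_inf (hinf x' Xx').2 _) _; first by exists y0.
by have /andP[] := Hf x' y0 Xx' Yy0.
Qed.

Lemma edistC (x y : 'rV[R]_n) : Defs.edist x y = Defs.edist y x.
Proof. by rewrite /Defs.edist; congr Num.sqrt; apply: eq_bigr => k _; rewrite -opprB sqrrN. Qed.


End Aux.
Arguments edist_bound {R n A B}.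
Arguments sup_inf_near {R T X Y f M x eps}.
Arguments ipz_diff {R n}.

Theorem lemma7p2 (R : realType) (n m : nat) (v : 'I_m -> 'I_n -> int)
  (lam : 'I_m -> R) (lami : nat -> 'I_m -> R) :
  (forall j, primitive (v j)) ->
  polytope_desc v lam ->
  (forall i, polytope_desc v (lami i)) ->
  hausdorff (hpoly v (lami i)) (hpoly v lam) @[i --> \oo] --> (0:R) ->
  forall j, lami i j - lam j @[i --> \oo] --> (0:R).
Proof.
move=> _ [bP [fP _]] Hi Hh j.
have [x0 [_ [[Px0 Ex0] _]]] := fP j.
set C := \sum_(k < n) `|(v j k)%:~R : R|.
have C0 : 0 <= C by apply: sumr_ge0.
have key : forall i eps, 0 < eps ->
   `|lami i j - lam j| <= C * (hausdorff (hpoly v (lami i)) (hpoly v lam) + eps).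
  move=> i eps e0.
  have [bPi [fPi _]] := Hi i.
  have [xi [_ [[Pxi Exi] _]]] := fPi j.
  have [M HM] := edist_bound bPi bP.
  rewrite ler_norml; apply/andP; split.
  - have [b Pb hb] := sup_inf_near (R:=R) (f := fun a b => Defs.edist a b) (X := hpoly v (lami i))
      (Y := hpoly v lam) HM (ex_intro _ x0 Px0) Pxi e0.
    have h1 : lam j - lami i j <= ipz (v j) b - ipz (v j) xi.
      move: (Pb j) Exi; rewrite /ell; lra.
    have h2 := ipz_diff (R:=R) (v j) b xi.
    have h3 : Defs.edist b xi <= hausdorff (hpoly v (lami i)) (hpoly v lam) + eps.
      rewrite edistC; apply/ltW/(lt_le_trans hb); rewrite lerD2r /hausdorff le_max lexx //.
    rewrite -/C in h2.
    have h4 := ler_wpM2l C0 h3.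
    lra.
  - have HM' : forall b a, hpoly v lam b -> hpoly v (lami i) a ->
        0 <= (fun b a => Defs.edist a b) b a <= M by move=> b a Hb Ha; exact: HM.
    have [a Pa ha] := sup_inf_near (R:=R) (X := hpoly v lam)
      (Y := hpoly v (lami i)) HM' (ex_intro _ xi Pxi) Px0 e0.
    have h1 : lami i j - lam j <= ipz (v j) a - ipz (v j) x0.
      move: (Pa j) Ex0; rewrite /ell; lra.
    have h2 := ipz_diff (R:=R) (v j) a x0.
    have h3 : Defs.edist a x0 <= hausdorff (hpoly v (lami i)) (hpoly v lam) + eps.
      apply/ltW/(lt_le_trans ha); rewrite lerD2r /hausdorff le_max lexx orbT //.
    rewrite -/C in h2.
    have h4 := ler_wpM2l C0 h3.
    lra.
apply/cvgrPdist_lt => e e0.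
have d0 : 0 < e / (2 * (C + 1)) by apply: divr_gt0 => //; lra.
have de : 2 * (C + 1) * (e / (2 * (C + 1))) = e by field; lra.
set d := e / (2 * (C + 1)) in d0 de.
move/cvgrPdist_lt: Hh => /(_ d d0).
apply: filterS => i hi.
rewrite sub0r normrN.
have := key i d d0.
rewrite sub0r normrN in hi.
have := ler_norm (hausdorff (hpoly v (lami i)) (hpoly v lam)).
nra.
Qed.
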